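(* Let $A$ be a $2\times2$ Hermitian matrix of Laurent polynomials with symmetry type $\mathrm{S}A(z)=\begin{bmatrix}1&\alpha(z)\\ \alpha^\star(z)&1\end{bmatrix}$, where either $\alpha(z)=\epsilon z^{2k+1}$ for some $\epsilon\in\{\pm1\}$, $k\in\mathbb Z$, or $\alpha(z)=z^{2k}$ for some $k\in\mathbb Z$. Suppose $\det(A)=C$ for some negative constant $C$. Then there exist a positive integer $K$ and strongly invertible $2\times2$ matrices $V^{(0)},\dots,V^{(K-1)}$ of Laurent polynomials with compatible symmetry such that $$A^{(K)}(z):=V^{(K-1)}(z)\cdots V^{(0)}(z)A(z)V^{(0)\star}(z)\cdots V^{(K-1)\star}(z)$$ satisfies: (i) all the multiplications in this product are compatible; (ii) at least one entry of $A^{(K)}$ is the zero Laurent polynomial.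
   Context: Laurent polynomials $u(z)=\sum_ku(k)z^k$ with finitely many nonzero complex coefficients. For a matrix $P(z)=\sum_kP(k)z^k$, $P^\star(z):=\sum_k\overline{P(k)}^Tz^{-k}$; Hermitian means $P^\star=P$. $u$ has symmetry of type $\epsilon z^c$ if $u(z)=\epsilon z^cu(z^{-1})$; for nonzero $u$, $\mathrm{S}u(z):=u(z)/u(z^{-1})$; zero has every type; for a type $\beta=\epsilon z^c$, $\beta^\star:=\epsilon z^{-c}$; $\mathrm{S}$ of a matrix is taken entrywise. A type means an expression $\pm z^m$, $m\in\mathbb Z$. An $r\times s$ matrix $P$ has compatible symmetry if there are types $\tau_1,\dots,\tau_r,\rho_1,\dots,\rho_s$ with each $P_{j,k}$ of type $\tau_j^{-1}\rho_k$. A product $P_1P_2\cdots P_m$ of matrices is compatible if there are type vectors $\tau^{(0)},\dots,\tau^{(m)}$ (of matching lengths) such that each entry $(P_i)_{j,k}$ has symmetry type $(\tau^{(i-1)}_j)^{-1}\tau^{(i)}_k$. A square matrix of Laurent polynomials is strongly invertible if its determinant is a nonzero monomial $cz^m$. *)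

(* Defs.v *)
(* Laurent polynomials with coefficients in a
   numClosedFieldType C (instantiated with C = R[i], R : realType, i.e. the
   complex numbers) are represented by their coefficient functions, as
   finitely supported functions int -> C (finmap's fsfun with default 0):
   u(z) = \sum_k u k z^k. *)
From HB Require Import structures.
From mathcomp Require Import all_boot all_order all_algebra finmap.
From mathcomp Require Import complex reals.

Set Implicit Arguments.
Unset Strict Implicit.
Unset Printing Implicit Defensive.

Import Order.TTheory GRing.Theory Num.Theory.
Local Open Scope ring_scope.


Section Laurent.
Variable C : numClosedFieldType.

Definition laur := {fsfun int -> C with 0}.

Definition lmono (c : C) (m : int) : laur := [fsfun k in [fset m]%fset => c].

Definition ladd (u v : laur) : laur :=
  [fsfun k in (finsupp u `|` finsupp v)%fset => u k + v k].

Definition lopp (u : laur) : laur := [fsfun k in finsupp u => - u k].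

Definition lmul (u v : laur) : laur :=
  [fsfun k in [fset (i + j)%R | i in finsupp u, j in finsupp v]%fset =>
     \sum_(i <- finsupp u) u i * v (k - i)].

Definition lstar (u : laur) : laur :=
  [fsfun k in [fset (- i)%R | i in finsupp u]%fset => (u (- k))^*].

(* symmetry types  eps z^c  encoded as (b, c) with eps = (-1)^b *)
Definition ltype := (bool * int)%type.
Definition tsign (t : ltype) : C := (-1) ^+ t.1.
Definition tmul (t s : ltype) : ltype := (t.1 (+) s.1, t.2 + s.2).
Definition tinv (t : ltype) : ltype := (t.1, - t.2).
Definition tstar (t : ltype) : ltype := (t.1, - t.2).

(* u has symmetry of type eps z^c :  u(z) = eps z^c u(z^{-1}),
   i.e. coefficientwise  u k = eps * u (c - k). (0 has every type.) *)
Definition has_type (u : laur) (t : ltype) : Prop :=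
  forall k, u k = tsign t * u (t.2 - k).

Definition lmxmul (A B : 'M[laur]_2) : 'M[laur]_2 :=
  \matrix_(i, j) ladd (lmul (A i 0) (B 0 j)) (lmul (A i 1) (B 1 j)).

Definition lmxstar (A : 'M[laur]_2) : 'M[laur]_2 :=
  \matrix_(i, j) lstar (A j i).

Definition ldet2 (A : 'M[laur]_2) : laur :=
  ladd (lmul (A 0 0) (A 1 1)) (lopp (lmul (A 0 1) (A 1 0))).

Definition lhermitian (A : 'M[laur]_2) : Prop := lmxstar A = A.

Definition strongly_invertible (A : 'M[laur]_2) : Prop :=
  exists (c : C) (m : int), c != 0 /\ ldet2 A = lmono c m.

Definition mx_types (A : 'M[laur]_2) (tau rho : 'I_2 -> ltype) : Prop :=
  forall j k, has_type (A j k) (tmul (tinv (tau j)) (rho k)).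

Definition compatible_symmetry (A : 'M[laur]_2) : Prop :=
  exists tau rho, mx_types A tau rho.

(* the product P_1 P_2 ... P_m (given as the list [:: P_1; ...; P_m]) is
   compatible: there are type vectors tau^(0), ..., tau^(m) with each
   (P_i)_{j,k} of type (tau^(i-1)_j)^{-1} tau^(i)_k *)
Fixpoint compat_chain (tau0 : 'I_2 -> ltype) (Ps : seq 'M[laur]_2) : Prop :=
  match Ps with
  | [::] => True
  | P :: Ps' => exists tau1, mx_types P tau0 tau1 /\ compat_chain tau1 Ps'
  end.

Definition compatible_product (Ps : seq 'M[laur]_2) : Prop :=
  exists tau0, compat_chain tau0 Ps.

(* A^(K) = V^(K-1) ... V^(0) A V^(0)star ... V^(K-1)star,
   for Vs = [:: V^(0); ...; V^(K-1)] *)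
Definition conj_by (A : 'M[laur]_2) (Vs : seq 'M[laur]_2) : 'M[laur]_2 :=
  foldl (fun M V => lmxmul (lmxmul V M) (lmxstar V)) A Vs.

Definition conj_factors (A : 'M[laur]_2) (Vs : seq 'M[laur]_2)
  : seq 'M[laur]_2 :=
  rev Vs ++ A :: map lmxstar Vs.

End Laurent.

(* Main.v *)
Require Import Defs.
From HB Require Import structures.
From mathcomp Require Import all_boot all_order all_algebra finmap.
From mathcomp Require Import complex reals.
From mathcomp.multinomials Require Import monalg.
From mathcomp Require Import zify ring lra.
Set Implicit Arguments.
Unset Strict Implicit.
Unset Printing Implicit Defensive.
Import Order.TTheory GRing.Theory Num.Theory.
Local Open Scope ring_scope.



Definition LP (R : comNzRingType) := {malg R[int]}.
Section LRing.
Variable R : comNzRingType.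
Local Notation M := {malg R[int]}.
Implicit Types (g : M).

Definition lgone : M := << 1 *g (0:int) >>.
Definition lgmul g1 g2 : M :=
  \sum_(k1 <- msupp g1) \sum_(k2 <- msupp g2) << g1@_k1 * g2@_k2 *g (k1 + k2) >>.

Lemma lgmullw (d1 d2 : {fset int}) g1 g2 :
  (msupp g1 `<=` d1)%fset -> (msupp g2 `<=` d2)%fset ->
  lgmul g1 g2 = \sum_(k1 <- d1) \sum_(k2 <- d2) << g1@_k1 * g2@_k2 *g (k1 + k2) >>.
Proof.
move=> le_d1 le_d2; rewrite /lgmul (big_fset_incl _ le_d1) /=.
  apply/eq_bigr=> k1 _; apply/big_fset_incl => // k _ /mcoeff_outdom ->.
  by rewrite mulr0 monalgU0.
move=> k _ /mcoeff_outdom g1k.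
by rewrite big1 => // k' _; rewrite g1k mul0r monalgU0.
Qed.

Lemma lgmul0g : left_zero 0 lgmul.
Proof. by move=> g; rewrite /lgmul msupp0 big_seq_fset0. Qed.
Lemma lgmulg0 : right_zero 0 lgmul.
Proof. by move=> g; rewrite /lgmul exchange_big msupp0 big_seq_fset0. Qed.

Lemma lgmulUg c k g :
  lgmul << c *g k >> g = \sum_(k' <- msupp g) << c * g@_k' *g k + k' >>.
Proof.
rewrite (lgmullw msuppU_le (fsubset_refl _)) big_seq_fset1.
by apply/eq_bigr => k' _; rewrite mcoeffUU.
Qed.

Lemma lgmulgU c k g :
  lgmul g << c *g k >> = \sum_(k' <- msupp g) << g@_k' * c *g k' + k >>.
Proof.
rewrite (lgmullw (fsubset_refl _) msuppU_le).
by apply/eq_bigr=> k' _; rewrite big_seq_fset1 mcoeffUU.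
Qed.

Lemma lgmulUU c1 c2 k1 k2 :
  lgmul << c1 *g k1 >> << c2 *g k2 >> = << c1 * c2 *g k1 + k2 >>.
Proof. by rewrite (lgmullw msuppU_le msuppU_le) !big_seq_fset1 !mcoeffUU. Qed.

Lemma lgmulEl1 g1 g2 :
  lgmul g1 g2 = \sum_(k1 <- msupp g1) lgmul << g1@_k1 *g k1 >> g2.
Proof. by apply/eq_bigr=> k _; rewrite lgmulUg. Qed.

Lemma lgmulEr1 g1 g2 :
  lgmul g1 g2 = \sum_(k2 <- msupp g2) lgmul g1 << g2@_k2 *g k2 >>.
Proof.
rewrite /lgmul exchange_big; apply/eq_bigr=> k _ /=.
by rewrite -[RHS]/(lgmul g1 << g2@_k *g k >>) lgmulgU.
Qed.

Lemma lgmul1g : left_id lgone lgmul.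
Proof.
move=> g; rewrite lgmulUg [RHS]monalgE.
by apply/eq_bigr=> kg _; rewrite mul1r add0r.
Qed.

Lemma lgmulg1 : right_id lgone lgmul.
Proof.
move=> g; rewrite lgmulgU [RHS]monalgE.
by apply/eq_bigr=> k _; rewrite mulr1 addr0.
Qed.

Lemma lgmulgDl : left_distributive lgmul +%R.
Proof.
move=> g1 g2 g; rewrite [in RHS](lgmullw (fsubsetUl _ (msupp g2)) (fsubset_refl _)).
rewrite [in RHS](lgmullw (fsubsetUr (msupp g1) _) (fsubset_refl _)).
rewrite (lgmullw (msuppD_le _ _) (fsubset_refl _)).
rewrite -big_split /=; apply/eq_bigr=> k1 _.
rewrite -big_split /=; apply/eq_bigr=> k2 _.
by rewrite mcoeffD mulrDl monalgUD.
Qed.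

Lemma lgmulC : commutative lgmul.
Proof.
move=> g1 g2; rewrite /lgmul exchange_big; apply/eq_bigr=> k1 _.
by apply/eq_bigr=> k2 _; rewrite mulrC addrC.
Qed.

Lemma lgmulgDr : right_distributive lgmul +%R.
Proof. by move=> g g1 g2; rewrite !(lgmulC g) lgmulgDl. Qed.

Lemma lgmulA : associative lgmul.
Proof.
move=> g1 g2 g3.
rewrite [RHS](big_morph (lgmul^~ _) (fun _ _ => lgmulgDl _ _ _) (lgmul0g _)).
rewrite lgmulEl1; apply/eq_bigr=> k1 _.
rewrite [LHS](big_morph (lgmul _) (fun _ _ => lgmulgDr _ _ _) (lgmulg0 _)).
rewrite [RHS](big_morph (lgmul^~ _) (fun _ _ => lgmulgDl _ _ _) (lgmul0g _)).
apply/eq_bigr=> k2 _.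
rewrite [LHS](big_morph (lgmul _) (fun _ _ => lgmulgDr _ _ _) (lgmulg0 _)).
by rewrite lgmulEr1; apply/eq_bigr=> k3 _; rewrite !lgmulUU mulrA addrA.
Qed.

Lemma lgoner_eq0 : lgone != 0.
Proof. by apply/eqP/malgP=> /(_ 0) /eqP; rewrite mcoeffUU mcoeff0 oner_eq0. Qed.

HB.instance Definition _ := GRing.Lmodule.on (LP R).
HB.instance Definition _ := GRing.Zmodule_isRing.Build (LP R)
  lgmulA lgmul1g lgmulg1 lgmulgDl lgmulgDr lgoner_eq0.
HB.instance Definition _ := GRing.Ring_hasCommutativeMul.Build (LP R) lgmulC.

Lemma lgM_def (g1 g2 : LP R) : g1 * g2 = lgmul g1 g2. Proof. by []. Qed.

End LRing.



Section Coef.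
Variable R : comNzRingType.
Local Notation M := (LP R).
Implicit Types (g h : M).

Lemma mcoeffUE (x : R) (c k : int) : (<< x *g c >> : M)@_k = if c == k then x else 0.
Proof. by rewrite mcoeffU; case: eqP. Qed.

Lemma mcoeffM g h k : (g * h)@_k = \sum_(i <- msupp g) g@_i * h@_(k - i).
Proof.
rewrite lgM_def /lgmul raddf_sum; apply: eq_bigr => i _.
rewrite raddf_sum /=.
have [hin|hout] := boolP ((k - i) \in msupp h).
  rewrite (big_fsetD1 (k - i)) //= mcoeffUE subrKC eqxx big1_fset ?addr0 //.
  move=> j; rewrite !inE => /andP [jne _] _; rewrite mcoeffUE.
  case: eqP => // e; move: jne; rewrite -e addrC addKr eqxx //.
rewrite (mcoeff_outdom hout) mulr0 big1_fset // => j jin _.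
rewrite mcoeffUE; case: eqP => // e; move: hout; rewrite -e addrC addKr jin //.
Qed.

Lemma mcoeffMw (S : {fset int}) g h k : (msupp g `<=` S)%fset ->
  (g * h)@_k = \sum_(i <- S) g@_i * h@_(k - i).
Proof.
move=> le; rewrite mcoeffM (big_fset_incl _ le) // => i _ /mcoeff_outdom ->.
by rewrite mul0r.
Qed.

Lemma mcoeffUM (x : R) (c : int) g k : ((<< x *g c >> : M) * g)@_k = x * g@_(k - c).
Proof.
by rewrite (mcoeffMw _ _ msuppU_le) big_seq_fset1 mcoeffUU.
Qed.

Lemma mcoeffMU (x : R) (c : int) g k : (g * (<< x *g c >> : M))@_k = x * g@_(k - c).
Proof. by rewrite mulrC mcoeffUM. Qed.

Lemma monoM (x y : R) (c e : int) : (<< x *g c >> : M) * << y *g e >> = << x * y *g c + e >>.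
Proof. exact: lgmulUU. Qed.

Lemma mono1 : (<< 1 *g 0 >> : M) = 1. Proof. by []. Qed.

Lemma M_eq g h : (forall k, g@_k = h@_k) -> g = h.
Proof. by move/malgP. Qed.

Lemma mcoeffM_top g h p q :
  (forall j, p < j -> g@_j = 0) -> (forall j, q < j -> h@_j = 0) ->
  (g * h)@_(p + q) = g@_p * h@_q /\ forall k, p + q < k -> (g * h)@_k = 0.
Proof.
move=> gp hq; split.
  rewrite (mcoeffMw _ _ (fsubsetU1 p (msupp g))) (big_fsetD1 p) ?fsetU11 //=.
  rewrite (_ : p + q - p = q); last by lia.
  rewrite big1_fset ?addr0 // => i; rewrite !inE => /andP[ip _] _.
  have [lt|ge] := ltP p i; first by rewrite gp // mul0r.
  by rewrite hq ?mulr0 //; move: ip ge => /eqP; lia.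
move=> k lt; rewrite mcoeffM big1_fset // => i _ _.
have [lt2|ge] := ltP p i; first by rewrite gp // mul0r.
by rewrite hq ?mulr0 //; lia.
Qed.

End Coef.


Section LMap.
Variable C : numClosedFieldType.
Local Notation M := (LP C).
Implicit Types (g h : M) (u v : laur C).

Definition L u : M := mkmalg u.
Lemma LE u k : (L u)@_k = u k. Proof. by []. Qed.
Lemma L_inj : injective L. Proof. by move=> u v []. Qed.
Lemma Lval g : L (malg_val g) = g. Proof. by case: g. Qed.


Lemma L_add u v : L (ladd u v) = L u + L v.
Proof. by []. Qed.

Lemma L_opp u : L (lopp u) = - L u.
Proof. by []. Qed.

Lemma L_mono c m : L (lmono c m) = << c *g m >>.
Proof.
apply/M_eq => k; rewrite mcoeffUE LE /lmono fsfun_fun !inE eq_sym.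
by case: eqP.
Qed.

Lemma L_mul u v : L (lmul u v) = L u * L v.
Proof.
apply/M_eq => k; rewrite mcoeffM LE /lmul fsfun_fun.
case: ifP => // kin; apply/esym/big1_fset => i iin _.
rewrite !LE; case: (finsuppP v (k - i)) => [|vin]; first by rewrite mulr0.
by move: kin; rewrite (_ : k = i + (k - i)) ?in_imfset2 //; lia.
Qed.

End LMap.


Section Rev.
Variable C : numClosedFieldType.
Local Notation M := (LP C).
Implicit Types (g h : M) (u v : laur C).

Lemma revF_mul (s : C -> C) (F : M -> M) :
  s 0 = 0 -> (forall x y, s (x + y) = s x + s y) -> (forall x y, s (x * y) = s x * s y) ->
  (forall g k, (F g)@_k = s (g@_(-k))) ->
  forall g h, F (g * h) = F g * F h.
Proof.
move=> s0 sD sM FE g h; apply/M_eq => k.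
have sub : (msupp (F g) `<=` [fset (- i) | i in msupp g])%fset.
  apply/fsubsetP => j; rewrite -mcoeff_neq0 FE => nz.
  rewrite -[j]opprK. apply: in_imfset => /=.
  by rewrite -mcoeff_neq0; apply: contra_neq nz => ->.
rewrite (mcoeffMw _ _ sub) [LHS]FE mcoeffM big_imfset /=; last by move=> x y _ _ /oppr_inj.
rewrite (big_morph s sD s0).
by apply: eq_bigr => i _; rewrite !FE sM !opprK opprD.
Qed.
End Rev.

Section Star.
Variable C : numClosedFieldType.
Local Notation M := (LP C).
Implicit Types (g h : M) (u v : laur C).

Definition mstar g : M := L (lstar (malg_val g)).
Definition mrev g : M :=
  L [fsfun k in [fset (- i)%R | i in finsupp (malg_val g)]%fset => malg_val g (- k)].

Lemma L_star u : L (lstar u) = mstar (L u). Proof. by []. Qed.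

Lemma mstarE g k : (mstar g)@_k = (g@_(-k))^*.
Proof.
rewrite /mstar LE /lstar fsfun_fun; case: ifP => // kin.
rewrite /mcoeff; case: finsuppP => [_|gin] /=; first by rewrite conjC0.
by move: kin; rewrite -[k]opprK in_imfset.
Qed.

Lemma mrevE g k : (mrev g)@_k = g@_(-k).
Proof.
rewrite /mrev LE fsfun_fun; case: ifP => // kin.
rewrite /mcoeff; case: finsuppP => [_|gin] //=.
by move: kin; rewrite -[k]opprK in_imfset.
Qed.

Lemma mstarM g h : mstar (g * h) = mstar g * mstar h.
Proof.
apply: (revF_mul (s := Num.conj_op)) => //; [exact: conjC0|exact: rmorphD|exact: rmorphM|exact: mstarE].
Qed.

Lemma mrevM g h : mrev (g * h) = mrev g * mrev h.
Proof. by apply: (revF_mul (s := id)) => // g0 k; rewrite mrevE. Qed.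

Lemma mstarD g h : mstar (g + h) = mstar g + mstar h.
Proof. by apply/M_eq => k; rewrite mcoeffD !mstarE mcoeffD rmorphD. Qed.
Lemma mstarN g : mstar (- g) = - mstar g.
Proof. by apply/M_eq => k; rewrite mcoeffN !mstarE mcoeffN rmorphN. Qed.
Lemma mstarB g h : mstar (g - h) = mstar g - mstar h.
Proof. by rewrite mstarD mstarN. Qed.
Lemma mstarU x c : mstar (<< x *g c >> : M) = << x^* *g (- c) >>.
Proof.
apply/M_eq => k; rewrite mstarE !mcoeffUE eqr_oppLR eq_sym.
by case: eqP => //; rewrite conjC0.
Qed.
Lemma mstar1 : mstar (1 : M) = 1.
Proof. by rewrite -mono1 mstarU conjC1 oppr0. Qed.
Lemma mstar0 : mstar (0 : M) = 0.
Proof. by apply/M_eq => k; rewrite mstarE !mcoeff0 conjC0. Qed.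
Lemma mstarK g : mstar (mstar g) = g.
Proof. by apply/M_eq => k; rewrite !mstarE opprK conjCK. Qed.

Lemma mrevD g h : mrev (g + h) = mrev g + mrev h.
Proof. by apply/M_eq => k; rewrite mcoeffD !mrevE mcoeffD. Qed.
Lemma mrevU x c : mrev (<< x *g c >> : M) = << x *g (- c) >>.
Proof. by apply/M_eq => k; rewrite mrevE !mcoeffUE eqr_oppLR eq_sym. Qed.
Lemma mrev0 : mrev (0 : M) = 0.
Proof. by apply/M_eq => k; rewrite mrevE !mcoeff0. Qed.
Lemma mstar_rev g : mstar (mrev g) = mrev (mstar g).
Proof. by apply/M_eq => k; rewrite mstarE !mrevE mstarE. Qed.

Definition mtype g (e : C) (c : int) := g = (<< e *g c >> : M) * mrev g.

Lemma has_typeE u t : has_type u t <-> mtype (L u) (tsign C t) t.2.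
Proof.
split => [H|H].
  by apply/M_eq => k; rewrite mcoeffUM mrevE !LE opprB H.
move=> k; have /(congr1 (mcoeff k)) := H.
by rewrite mcoeffUM mrevE !LE opprB.
Qed.

Lemma mtypeM g h e1 e2 c1 c2 : mtype g e1 c1 -> mtype h e2 c2 ->
  mtype (g * h) (e1 * e2) (c1 + c2).
Proof.
rewrite /mtype => Hg Hh.
rewrite mrevM -monoM {1}Hg {1}Hh; ring.
Qed.

Lemma mtypeD g h e c : mtype g e c -> mtype h e c -> mtype (g + h) e c.
Proof. by rewrite /mtype => Hg Hh; rewrite mrevD mulrDr -Hg -Hh. Qed.

Lemma mtype0 e c : mtype 0 e c.
Proof. by rewrite /mtype mrev0 mulr0. Qed.

Lemma mtype_star g e c : e^* = e -> mtype g e c -> mtype (mstar g) e (- c).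
Proof.
rewrite /mtype => ee Hg; rewrite {1}Hg mstarM mstarU ee mstar_rev //.
Qed.

Lemma tsign_conj (t : ltype) : (tsign C t)^* = tsign C t.
Proof. by rewrite /tsign rmorph_sign. Qed.

Lemma tsignM (t s : ltype) : tsign C (tmul t s) = tsign C t * tsign C s.
Proof. by rewrite /tsign /tmul /= signr_addb. Qed.

Lemma has_type_mul u v t s : has_type u t -> has_type v s ->
  has_type (lmul u v) (tmul t s).
Proof.
move=> /has_typeE Hu /has_typeE Hv; apply/has_typeE.
by rewrite L_mul tsignM; apply: mtypeM.
Qed.

Lemma has_type_add u v t : has_type u t -> has_type v t -> has_type (ladd u v) t.
Proof.
move=> /has_typeE Hu /has_typeE Hv; apply/has_typeE.
by rewrite L_add; apply: mtypeD.
Qed.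

Lemma has_type_star u t : has_type u t -> has_type (lstar u) (tstar t).
Proof.
move=> /has_typeE Hu; apply/has_typeE.
by rewrite L_star; apply: mtype_star => //; rewrite tsign_conj.
Qed.

End Star.


Lemma ltype_cancel (x y z : ltype) :
  tmul (tmul (tinv x) y) (tmul (tinv y) z) = tmul (tinv x) z.
Proof.
case: x y z => [b1 c1] [b2 c2] [b3 c3]; rewrite /tmul /tinv /=.
congr pair; first by case: b1; case: b2; case: b3.
lia.
Qed.

Lemma ltype_star (x y : ltype) : tstar (tmul (tinv x) y) = tmul (tinv y) x.
Proof.
case: x y => [b1 c1] [b2 c2]; rewrite /tmul /tinv /tstar /=.
congr pair; first by case: b1; case: b2.
lia.
Qed.

Lemma ltype_self (x : ltype) : tmul (tinv x) x = (false, 0%Z).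
Proof.
case: x => [b1 c1]; rewrite /tmul /tinv /=.
congr pair; first by case: b1.
lia.
Qed.

Section Mx.
Variable C : numClosedFieldType.
Local Notation M := (LP C).
Local Notation laur := (laur C).
Implicit Types (P Q V : 'M[laur]_2).

Lemma L_mxmul P Q i j :
  L (lmxmul P Q i j) = L (P i 0) * L (Q 0 j) + L (P i 1) * L (Q 1 j).
Proof. by rewrite /lmxmul mxE L_add !L_mul. Qed.

Lemma L_mxstar P i j : L (lmxstar P i j) = mstar (L (P j i)).
Proof. by rewrite /lmxstar mxE. Qed.

Lemma L_det P : L (ldet2 P) = L (P 0 0) * L (P 1 1) - L (P 0 1) * L (P 1 0).
Proof. by rewrite /ldet2 L_add L_opp !L_mul. Qed.

Definition mx2 (x y z w : laur) : 'M[laur]_2 :=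
  \matrix_(i, j) if i == 0 then (if j == 0 then x else y)
                 else (if j == 0 then z else w).

Lemma mx2E x y z w :
  [/\ mx2 x y z w 0 0 = x, mx2 x y z w 0 1 = y, mx2 x y z w 1 0 = z &
      mx2 x y z w 1 1 = w].
Proof. by rewrite /mx2 !mxE. Qed.

Lemma mx_types_mul P Q s r p :
  mx_types P s r -> mx_types Q r p -> mx_types (lmxmul P Q) s p.
Proof.
move=> HP HQ j k; rewrite /lmxmul mxE.
apply: has_type_add.
  by rewrite -(ltype_cancel (s j) (r 0) (p k)); apply: has_type_mul.
by rewrite -(ltype_cancel (s j) (r 1) (p k)); apply: has_type_mul.
Qed.

Lemma mx_types_star P s r : mx_types P s r -> mx_types (lmxstar P) r s.
Proof.
move=> HP j k; rewrite /lmxstar mxE -ltype_star.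
exact: has_type_star.
Qed.

Lemma has_type_eq (u : laur) t t' : t = t' -> has_type u t -> has_type u t'.
Proof. by move=> ->. Qed.

Lemma has_type0 t : has_type (lmono (0 : C) 0) t.
Proof. by move=> k; rewrite /lmono !fsfun_fun; case: ifP; case: ifP; rewrite mulr0. Qed.

Lemma has_type1 t : t = (false, 0%Z) -> has_type (lmono (1 : C) 0) t.
Proof.
move=> -> k; rewrite /lmono !fsfun_fun !inE /tsign /= mul1r sub0r.
by rewrite eqr_oppLR oppr0.
Qed.

Fixpoint chain_to (s : 'I_2 -> ltype) (Ps : seq 'M[laur]_2) (r : 'I_2 -> ltype)
  : Prop :=
  match Ps with
  | [::] => s = r
  | P :: Ps' => exists s1, mx_types P s s1 /\ chain_to s1 Ps' r
  end.

Lemma chain_cat s Ps r Qs p :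
  chain_to s Ps r -> chain_to r Qs p -> chain_to s (Ps ++ Qs) p.
Proof.
elim: Ps s => [|P Ps IH] s /=; first by move=> ->.
by move=> [s1 [H1 H2]] H3; exists s1; split => //; apply: IH.
Qed.

Lemma chain_compat s Ps r : chain_to s Ps r -> compat_chain s Ps.
Proof.
elim: Ps s => [|P Ps IH] s //= [s1 [H1 H2]].
by exists s1; split => //; apply: IH H2.
Qed.

Fixpoint good_chain (t : 'I_2 -> ltype) (Vs : seq 'M[laur]_2) : Prop :=
  match Vs with
  | [::] => True
  | V :: Vs' => exists s, mx_types V s t /\ good_chain s Vs'
  end.

Lemma good_chain_mid Vs t Mid : good_chain t Vs -> chain_to t Mid t ->
  exists s, chain_to s (rev Vs ++ Mid ++ map (@lmxstar C) Vs) s.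
Proof.
elim: Vs t Mid => [|V Vs IH] t Mid /=.
  by move=> _ H; exists t; rewrite cats0.
move=> [s [HV Hg]] HM.
have HM' : chain_to s (V :: Mid ++ [:: lmxstar V]) s.
  exists t; split => //; apply: chain_cat HM _.
  by exists s; split => //; apply: mx_types_star.
have [s' Hs'] := IH s _ Hg HM'; exists s'.
by rewrite rev_cons -cats1 -!catA /= -catA in Hs' *.
Qed.

Lemma good_compat A t Vs : mx_types A t t -> good_chain t Vs ->
  compatible_product (conj_factors A Vs).
Proof.
move=> HA Hg; have [|s Hs] := good_chain_mid (Mid := [:: A]) Hg.
  by exists t; split.
by exists s; apply: chain_compat Hs.
Qed.

End Mx.


Definition allowed (a : ltype) :=
  (exists (eps : bool) (k : int), a = (eps, 2 * k + 1)) \/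
  (exists k : int, a = (false, 2 * k)).
Definition alphaOf (t : 'I_2 -> ltype) := tmul (tinv (t 0)) (t 1).

Lemma allowed_star a : allowed a -> allowed (tstar a).
Proof.
case=> [[eps [k ->]]|[k ->]]; rewrite /tstar /=.
  by left; exists eps, (- k - 1); congr pair; lia.
by right; exists (- k); congr pair; lia.
Qed.

Lemma ord2P (j : 'I_2) : j = 0 \/ j = 1.
Proof.
case: j => [[|[|m]] H].
- by left; apply: val_inj.
- by right; apply: val_inj.
- by [].
Qed.
Lemma forall2 (P : 'I_2 -> 'I_2 -> Prop) :
  P 0 0 -> P 0 1 -> P 1 0 -> P 1 1 -> forall j k, P j k.
Proof.
move=> H00 H01 H10 H11 j k.
by case: (ord2P j) => ->; case: (ord2P k) => ->.
Qed.

Section Main.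
Variable C : numClosedFieldType.
Local Notation M := (LP C).
Local Notation laur := (laur C).
Implicit Types (A V : 'M[laur]_2) (g h : M).

Definition one : laur := lmono 1 0.
Definition zero : laur := lmono 0 0.
Lemma L_one : L one = 1. Proof. by rewrite L_mono. Qed.
Lemma L_zero : L zero = 0. Proof. by rewrite L_mono monalgU0. Qed.

Lemma mx2_00 (x y z w : laur) : mx2 x y z w 0 0 = x. Proof. by rewrite /mx2 mxE. Qed.
Lemma mx2_01 (x y z w : laur) : mx2 x y z w 0 1 = y. Proof. by rewrite /mx2 mxE. Qed.
Lemma mx2_10 (x y z w : laur) : mx2 x y z w 1 0 = z. Proof. by rewrite /mx2 mxE. Qed.
Lemma mx2_11 (x y z w : laur) : mx2 x y z w 1 1 = w. Proof. by rewrite /mx2 mxE. Qed.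
Definition mx2E' := (mx2_00, mx2_01, mx2_10, mx2_11).

Definition conj1 V A := lmxmul (lmxmul V A) (lmxstar V).

Definition Hyp A t (c0 : C) :=
  [/\ mstar (L (A 0 0)) = L (A 0 0), mstar (L (A 1 1)) = L (A 1 1),
      L (A 1 0) = mstar (L (A 0 1)), mx_types A t t &
      allowed (alphaOf t) /\
      L (A 0 0) * L (A 1 1) - L (A 0 1) * L (A 1 0) = << c0 *g 0 >>].

Definition Concl A t := exists Vs : seq 'M[laur]_2,
  [/\ (0 < size Vs)%N,
      (forall V, V \in Vs -> strongly_invertible V /\ compatible_symmetry V),
      good_chain t Vs &
      exists j k : 'I_2, forall n : int, conj_by A Vs j k n = 0].

Definition Bound g (n : nat) := exists l : int, forall k, g@_k != 0 -> l <= k < l + n%:Z.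
Definition IsMax g (m : int) := g@_m != 0 /\ forall k, m < k -> g@_k = 0.

Lemma concl_cons V A t s : strongly_invertible V -> mx_types V s t ->
  Concl (conj1 V A) s -> Concl A t.
Proof.
move=> SV TV [Vs [_ HV Hg Hz]]; exists (V :: Vs); split => //.
- move=> W; rewrite in_cons => /orP [/eqP ->|]; last exact: HV.
  by split => //; exists s, t.
- by exists s.
Qed.

Lemma zero_entry (X : laur) : L X = 0 -> forall n : int, X n = 0.
Proof. by move=> H n; rewrite -LE H mcoeff0. Qed.

Lemma concl_zero A t : mx_types A t t ->
  (L (A 0 0) = 0 \/ L (A 0 1) = 0 \/ L (A 1 1) = 0) -> Concl A t.
Proof.
move=> HT Hz; pose I := mx2 one zero zero one.
have TI : mx_types I t t.
  apply: forall2; rewrite /I !mx2E';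
    first [exact: has_type0 | apply: has_type1; by rewrite ?ltype_self].
have SI : strongly_invertible I.
  exists 1, 0; split; first exact: oner_neq0.
  by apply: L_inj; rewrite L_det !mx2E' L_one L_zero mulr0 subr0 mulr1.
exists [:: I]; split => //.
- move=> W; rewrite inE => /eqP ->; split => //; by exists t, t.
- by exists t.
rewrite (_ : conj_by A [:: I] = conj1 I A) //.
case: Hz => [H|[H|H]].
- exists 0, 0; apply: zero_entry.
  rewrite /conj1 !L_mxmul !L_mxstar /I !mx2E' L_one L_zero mstar1 mstar0 H; ring.
- exists 0, 1; apply: zero_entry.
  rewrite /conj1 !L_mxmul !L_mxstar /I !mx2E' L_one L_zero mstar1 mstar0 H; ring.
- exists 1, 1; apply: zero_entry.
  rewrite /conj1 !L_mxmul !L_mxstar /I !mx2E' L_one L_zero mstar1 mstar0 H; ring.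
Qed.



Lemma shear_entries A (x : laur) :
  let V := mx2 one zero x one in let s := mstar (L x) in
  [/\ L (conj1 V A 0 0) = L (A 0 0), L (conj1 V A 0 1) = L (A 0 0) * s + L (A 0 1),
     L (conj1 V A 1 0) = L x * L (A 0 0) + L (A 1 0) &
     L (conj1 V A 1 1) = (L x * L (A 0 0) + L (A 1 0)) * s + (L x * L (A 0 1) + L (A 1 1))].
Proof.
by split; rewrite /conj1 !L_mxmul !L_mxstar !mx2E' ?L_one ?L_zero ?mstar1 ?mstar0; ring.
Qed.

Lemma swap_entries A :
  let V := mx2 zero one one zero in
  [/\ L (conj1 V A 0 0) = L (A 1 1), L (conj1 V A 0 1) = L (A 1 0),
     L (conj1 V A 1 0) = L (A 0 1) & L (conj1 V A 1 1) = L (A 0 0)].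
Proof.
by split; rewrite /conj1 !L_mxmul !L_mxstar !mx2E' ?L_one ?L_zero ?mstar1 ?mstar0; ring.
Qed.

Lemma seq_max (s : seq int) : s != [::] -> exists2 x, x \in s & forall y, y \in s -> y <= x.
Proof.
elim: s => [//|a s IH] _.
have [->|ne] := eqVneq s [::].
  by exists a; rewrite ?inE // => y; rewrite inE => /eqP ->.
have [x xs xm] := IH ne.
have [ax|xa] := leP a x.
  exists x; first by rewrite inE xs orbT.
  by move=> y; rewrite inE => /orP [/eqP ->|/xm].
exists a; first by rewrite inE eqxx.
move=> y; rewrite inE => /orP [/eqP ->//|/xm yx].
by apply: (le_trans yx); apply: ltW.
Qed.

Lemma exists_max g : g != 0 -> exists m, IsMax g m.
Proof.
move=> nz.
have : (msupp g : seq int) != [::].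
  apply: contra nz => /eqP e; apply/eqP/M_eq => k; rewrite mcoeff0.
  by apply: mcoeff_outdom; apply/negP => kin; have : k \in (msupp g : seq int) by []; rewrite e.
move=> /seq_max [x xs xm]; exists x; split.
  by rewrite mcoeff_neq0.
move=> k lt; apply/eqP; rewrite mcoeff_eq0; apply/negP => kin.
by have := xm _ kin; rewrite leNgt lt.
Qed.

Lemma bound_exists g : exists n, Bound g n.
Proof.
pose N := (\sum_(k <- msupp g) `|k|)%N.
exists (2 * N + 1)%N, (- (N%:Z)) => k nz.
have : (`|k| <= N)%N.
  rewrite /N (big_rem k) /=; [exact: leq_addr | by rewrite -mcoeff_neq0].
lia.
Qed.

Lemma shear_claim c0 n
  (IH : forall m, (m < n)%N -> forall A t, Hyp A t c0 -> Bound (L (A 0 1)) m -> Concl A t)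
  A t : Hyp A t c0 -> Bound (L (A 0 1)) n ->
  forall ha hb, IsMax (L (A 0 0)) ha -> IsMax (L (A 0 1)) hb ->
  2 * ha <= 2 * hb - (alphaOf t).2 -> Concl A t.
Proof.
move=> [Ha Hd Hb' Hty [Hal Hdet]] [l Hl] ha hb [ha0 hamax] [hb0 hbmax] hw.
have bty0 := Hty 0 1.
set al := alphaOf t in Hal hw bty0.
set e := tsign C al. set c := al.2 in hw.
set a := L (A 0 0) in Ha Hdet ha0 hamax *.
set b := L (A 0 1) in Hb' Hdet hb0 hbmax Hl *.
have asym : forall k, a@_k = a@_(-k).
  move=> k; have := Hty 0 0; rewrite ltype_self => /(_ k).
  by rewrite /tsign /= mul1r sub0r.
have bty : forall k, b@_k = e * b@_(c - k) by move=> k; exact: (bty0 k).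
have e2 : e * e = 1 by rewrite /e /tsign -expr2 sqrr_sign.
have ene : e != 0 by rewrite /e /tsign signr_eq0.
have alow : forall k, c = 2 * k -> e = 1.
  move=> k ck; case: Hal => [[eps [k' E]]|[k' E]].
  - by exfalso; move: ck; rewrite /c E /=; lia.
  - by rewrite /e E /tsign.
have A1 : forall j, j < - ha -> a@_j = 0.
  by move=> j lt; rewrite asym; apply: hamax; lia.
have B1 : forall j, j < c - hb -> b@_j = 0.
  by move=> j lt; rewrite bty hbmax ?mulr0 //; lia.
have blo : b@_(c - hb) = e * b@_hb by rewrite bty (_ : c - (c - hb) = hb) //; lia.
have blo0 : b@_(c - hb) != 0 by rewrite blo mulf_neq0.
have lohb : c - hb <= hb.
  rewrite leNgt; apply/negP => lt; move: blo0; rewrite hbmax ?eqxx //.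
have [l1 _] := andP (Hl _ blo0).
have [_ l2] := andP (Hl _ hb0).
pose p := hb - ha.
pose kap := - (b@_hb / a@_ha).
have kap0 : b@_hb + kap * a@_ha = 0 by rewrite /kap mulNr divfK // subrr.
pose s : M := if 2 * p == c then << kap *g p >> else << kap *g p >> + << e * kap *g (c - p) >>.
have stype : mtype s e c.
  rewrite /s; case: eqP => E.
  - rewrite (alow p (esym E)) /mtype mrevU monoM mul1r.
    by congr (<< _ *g _ >>); lia.
  - rewrite /mtype mrevD !mrevU mulrDr !monoM addrC.
    congr (_ + _); congr (<< _ *g _ >>); rewrite ?mulrA ?e2 ?mul1r //; lia.
pose x := malg_val (mstar s).
have Lx : L x = mstar s := Lval _.
have sx : mstar (L x) = s by rewrite Lx mstarK.
pose V := mx2 one zero x one.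
have TV : mx_types V t t.
  apply: forall2; rewrite /V !mx2E';
    try (first [exact: has_type0 | apply: has_type1; by rewrite ?ltype_self]).
  rewrite -ltype_star; apply/has_typeE; rewrite Lx.
  by apply: mtype_star => //; rewrite tsign_conj.
have SV : strongly_invertible V.
  exists 1, 0; split; first exact: oner_neq0.
  by apply: L_inj; rewrite L_det /V !mx2E' L_one L_zero mul0r subr0 mulr1.
have := shear_entries A x; rewrite /= -/V sx -/a -/b => -[E00 E01 E10 E11].
apply: (concl_cons (s := t) SV TV).
have HA' : Hyp (conj1 V A) t c0.
  split.
  - by rewrite E00.
  - rewrite E11 Hb' !(mstarD, mstarM) mstarK sx -Lx Ha Hd; ring.
  - by rewrite E10 E01 Hb' mstarD mstarM Ha -Lx; ring.
  - apply: mx_types_mul; first exact: mx_types_mul TV Hty.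
    exact: mx_types_star TV.
  - split; first exact: Hal.
    rewrite E00 E11 E01 E10 -Hdet; ring.
have key : forall k, k <= c - hb \/ hb <= k -> (a * s + b)@_k = 0.
  move=> k hk; rewrite mcoeffD mulrC /s; case: eqP => E.
  - rewrite mcoeffUM.
    have [lt|[eq|[eq|lt]]] : k < c - hb \/ k = c - hb \/ k = hb \/ hb < k by lia.
    + by rewrite B1 // A1 ?mulr0 ?addr0 //; lia.
    + rewrite eq blo (alow p (esym E)) mul1r (_ : c - hb - p = - ha); last by lia.
      by rewrite -asym addrC.
    + by rewrite eq (_ : hb - p = ha) ?kap0 1?addrC ?kap0 //; lia.
    + by rewrite hbmax // hamax ?mulr0 ?addr0 //; lia.
  - rewrite mulrDl mcoeffD !mcoeffUM.
    have [lt|[eq|[eq|lt]]] : k < c - hb \/ k = c - hb \/ k = hb \/ hb < k by lia.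
    + by rewrite B1 // !A1 ?mulr0 ?addr0 //; lia.
    + rewrite eq blo A1; last by lia.
      rewrite (_ : c - hb - (c - p) = - ha); last by lia.
      rewrite -asym mulr0 add0r -mulrA -mulrDr addrC kap0 mulr0 //.
    + rewrite eq (hamax (hb - (c - p))); last by lia.
      by rewrite (_ : hb - p = ha) ?mulr0 ?addr0 1?addrC ?kap0 //; lia.
    + by rewrite hbmax // !hamax ?mulr0 ?addr0 //; lia.
have HB' : Bound (L (conj1 V A 0 1)) (absz (2 * hb - c)%R).
  exists (c - hb + 1) => k; rewrite E01 => nz.
  have : ~ (k <= c - hb \/ hb <= k) by move=> /key H; move: nz; rewrite H eqxx.
  lia.
apply: (IH (absz (2 * hb - c)%R)) => //; lia.
Qed.

Lemma main c0 n : forall A t, Hyp A t c0 -> Bound (L (A 0 1)) n -> Concl A t.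
Proof.
elim/ltn_ind: n => n IH A t HH HB.
have [Ha Hd Hb' Hty [Hal Hdet]] := HH.
have [z|nz] := boolP [|| L (A 0 0) == 0, L (A 0 1) == 0 | L (A 1 1) == 0].
  apply: concl_zero Hty _.
  by case/or3P: z => /eqP z; [left|right;left|right;right].
rewrite !negb_or in nz; case/and3P: nz => na nb nd.
have [ha [ha0 hamax]] := exists_max na.
have [hb [hb0 hbmax]] := exists_max nb.
have [hd [hd0 hdmax]] := exists_max nd.
have bty0 := Hty 0 1.
set al := alphaOf t in Hal bty0.
set c := al.2.
have bty : forall k, (L (A 0 1))@_k = tsign C al * (L (A 0 1))@_(c - k).
  by move=> k; exact: (bty0 k).
have ene : tsign C al != 0 by rewrite /tsign signr_eq0.
have B1 : forall j, j < c - hb -> (L (A 0 1))@_j = 0.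
  by move=> j lt; rewrite bty hbmax ?mulr0 //; lia.
have blo0 : (L (A 0 1))@_(c - hb) != 0.
  by rewrite bty (_ : c - (c - hb) = hb) ?mulf_neq0 //; lia.
have lohb : c - hb <= hb.
  rewrite leNgt; apply/negP => lt; move: blo0; rewrite hbmax ?eqxx //.
have ineq : ha + hd <= 2 * hb - c.
  rewrite leNgt; apply/negP => lt.
  have := congr1 (mcoeff (ha + hd)) Hdet.
  rewrite mcoeffB.
  have [top _] := mcoeffM_top hamax hdmax; rewrite top.
  have bb : (L (A 0 1) * L (A 1 0))@_(ha + hd) = 0.
    rewrite Hb'.
    have hz : forall j, hb - c < j -> (mstar (L (A 0 1)))@_j = 0.
      by move=> j ltj; rewrite mstarE B1 ?conjC0 //; lia.
    have [_ z] := mcoeffM_top hbmax hz.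
    by apply: z; lia.
  rewrite bb subr0 mcoeffUE (_ : (0 == ha + hd) = false); last by apply/eqP; lia.
  by move/eqP; rewrite mulf_eq0 (negbTE ha0) (negbTE hd0).
have [le|gt] := lerP (2 * ha) (2 * hb - c).
  exact: (shear_claim IH HH HB (conj ha0 hamax) (conj hb0 hbmax) le).
pose V := mx2 zero one one zero.
pose sg := fun j : 'I_2 => if j == 0 then t 1 else t 0.
have sg0 : sg 0 = t 1 by rewrite /sg eqxx.
have sg1 : sg 1 = t 0 by [].
have TV : mx_types V sg t.
  apply: forall2; rewrite /V !mx2E' ?sg0 ?sg1;
    first [exact: has_type0 | apply: has_type1; by rewrite ltype_self].
have SV : strongly_invertible V.
  exists (-1), 0; split; first by rewrite oppr_eq0 oner_eq0.
  apply: L_inj; rewrite L_det !mx2E' L_one L_zero L_mono monalgUN mono1.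
  by rewrite mul0r mulr1 sub0r.
have := swap_entries A; rewrite /= -/V => -[E00 E01 E10 E11].
apply: (concl_cons (s := sg) SV TV).
have HA' : Hyp (conj1 V A) sg c0.
  split.
  - by rewrite E00.
  - by rewrite E11.
  - by rewrite E10 E01 Hb' mstarK.
  - apply: mx_types_mul; first exact: mx_types_mul TV Hty.
    exact: mx_types_star TV.
  - split.
      by rewrite /alphaOf sg0 sg1 -ltype_star; apply: allowed_star.
    rewrite E00 E11 E01 E10 -Hdet; ring.
have HB' : Bound (L (conj1 V A 0 1)) n.
  have [l Hl] := HB; exists (- (l + n%:Z) + 1) => k; rewrite E01 Hb' mstarE => nz.
  have nz' : (L (A 0 1))@_(- k) != 0 by apply: contra_neq nz => ->; rewrite conjC0.
  have [] := andP (Hl _ nz'); lia.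
apply: (shear_claim IH HA' HB' (ha := hd) (hb := hb - c)).
- by rewrite E00; split.
- rewrite E01 Hb'; split.
    by rewrite mstarE opprB conjC_eq0.
  by move=> k lt; rewrite mstarE B1 ?conjC0 //; lia.
- move: ineq gt; rewrite /c /al /alphaOf sg0 sg1 /tmul /tinv /=; lia.
Qed.
End Main.

Theorem lemma3p7 (R : realType) (A : 'M[laur R[i]]_2) (alpha : ltype)
  (C : R[i]) :
  lhermitian A ->
  has_type (A 0 0) (false, 0%Z) ->
  has_type (A 0 1) alpha ->
  has_type (A 1 0) (tstar alpha) ->
  has_type (A 1 1) (false, 0%Z) ->
  ((exists (eps : bool) (k : int), alpha = (eps, 2 * k + 1)) \/
   (exists k : int, alpha = (false, 2 * k))) ->
  C < 0 ->
  ldet2 A = lmono C 0 ->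
  exists Vs : seq 'M[laur R[i]]_2,
    (0 < size Vs)%N /\
    (forall V, V \in Vs -> strongly_invertible V /\ compatible_symmetry V) /\
    compatible_product (conj_factors A Vs) /\
    exists (j k : 'I_2), forall n : int, conj_by A Vs j k n = 0.
Proof.
move=> Hh H00 H01 H10 H11 Hal _ Hdet.
pose t := fun j : 'I_2 => if j == 0 then (false, 0%Z) else alpha.
have t0 : t 0 = (false, 0%Z) by rewrite /t eqxx.
have t1 : t 1 = alpha by [].
have ea : tmul (tinv (false, 0%Z)) alpha = alpha.
  by case: (alpha) => b c; rewrite /tmul /tinv /=; congr pair; lia.
have Hty : mx_types A t t.
  apply: forall2; rewrite ?t0 ?t1.
  - by rewrite ltype_self.
  - by rewrite ea.
  - apply: (has_type_eq _ H10); case: (alpha) => b c; rewrite /tmul /tinv /tstar /=.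
    by congr pair; [case: b|lia].
  - by rewrite ltype_self.
have HH : Hyp A t C.
  split.
  - have e : L (lmxstar A 0 0) = L (A 0 0) by rewrite Hh.
    by rewrite L_mxstar in e.
  - have e : L (lmxstar A 1 1) = L (A 1 1) by rewrite Hh.
    by rewrite L_mxstar in e.
  - have e : L (lmxstar A 1 0) = L (A 1 0) by rewrite Hh.
    by rewrite L_mxstar in e; rewrite -e.
  - exact: Hty.
  - split; first by rewrite /alphaOf t0 t1 ea.
    by have := congr1 (@L _) Hdet; rewrite L_det L_mono.
have [n HB] := bound_exists (L (A 0 1)).
have [Vs [H1 H2 H3 H4]] := main HH HB.
exists Vs; split => //; split => //; split => //.
exact: good_compat Hty H3.
Qed.
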